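(* For every tWF net $N$: $N$ is $*$-sound if and only if $N$ is sub-sound.
   Context: Petri nets and markings. A Petri net is a triple $(P,T,F)$ with $P$ a finite set of places, $T$ a finite set of transitions, $P\cap T=\emptyset$, and $F\subseteq (P\times T)\cup(T\times P)$. For a node $x$, $\bullet x=\{y\mid (y,x)\in F\}$, $x\bullet=\{y\mid (x,y)\in F\}$. A marking is a multiset over $P$ (a function $P\to\mathbb N$); sets of places are identified with bags of multiplicity one, $+,-,\le$ are pointwise, and $k.m$ is the sum of $k$ copies of $m$. Transition $t$ is enabled at $m$ iff $\bullet t\le m$, firing gives $m-\bullet t+t\bullet$, and $m\xrightarrow{*}m'$ denotes reachability by a finite (possibly empty) firing sequence. Workflow nets. A pWF net is $(P,T,F,I,O)$ with $(P,T,F)$ a Petri net, $I,O\subseteq P$ non-empty, every node reachable by a directed path from some node of $I$, and some node of $O$ reachable from every node. A tWF net is the same with $I,O$ non-empty subsets of $T$. Input nodes may have incoming edges and output nodes outgoing edges. The place-completion $\mathrm{pc}(N)$ of a tWF net $N=(P,T,F,I,O)$ is obtained by adding two fresh places $p_i,p_o$ with edges $(p_i,t)$ for all $t\in I$ and $(t,p_o)$ for all $t\in O$, and taking input set $\{p_i\}$ and output set $\{p_o\}$. Soundness. A pWF net is $k$-sound if for every marking $m$ with $k.I\xrightarrow{*}m$ we have $m\xrightarrow{*}k.O$; $*$-sound if $k$-sound for all $k\ge1$; sub-sound if for all integers $k\ge k'\ge 0$ and every marking $m'$: $k.I\xrightarrow{*}m'+k'.O$ implies $m'\xrightarrow{*}(k-k').O$.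 A tWF net is $*$-sound (resp. sub-sound) iff its place-completion is. *)

(* Defs.v *)
From Stdlib Require Import Relations.
From mathcomp Require Import all_boot.
Set Implicit Arguments. Unset Strict Implicit. Unset Printing Implicit Defensive.

(* A Petri net (P,T,F) with finite place set P and transition set T (disjoint
   since nodes are P + T).  The flow relation F is given by
   pre p t  <=> (p,t) \in F     and    post t p <=> (t,p) \in F. *)
Record petri_net (P T : finType) := PetriNet {
  pre  : P -> T -> bool;
  post : T -> P -> bool }.

Section Nets.
Variables (P T : finType) (N : petri_net P T).

Definition marking := {ffun P -> nat}.

Definition mk_add (m1 m2 : marking) : marking := [ffun p => m1 p + m2 p].
Definition mk_scale (k : nat) (m : marking) : marking := [ffun p => k * m p].
Definition mk_of_set (A : {set P}) : marking := [ffun p => nat_of_bool (p \in A)].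

Definition enabled (m : marking) (t : T) : Prop :=
  forall p, nat_of_bool (pre N p t) <= m p.

Definition fire (m : marking) (t : T) : marking :=
  [ffun p => m p - nat_of_bool (pre N p t) + nat_of_bool (post N t p)].

Inductive step (m m' : marking) : Prop :=
  | Step t : enabled m t -> m' = fire m t -> step m m'.

Definition reach : marking -> marking -> Prop := clos_refl_trans marking step.

Definition flow (x y : P + T) : bool :=
  match x, y with
  | inl p, inr t => pre N p t
  | inr t, inl p => post N t p
  | _, _ => false
  end.

Definition is_pWF (I O : {set P}) : Prop :=
  I != set0 /\ O != set0 /\
  (forall x : P + T, exists2 i, i \in I & connect flow (inl i) x) /\
  (forall x : P + T, exists2 o, o \in O & connect flow x (inl o)).

Definition is_tWF (I O : {set T}) : Prop :=
  I != set0 /\ O != set0 /\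
  (forall x : P + T, exists2 i, i \in I & connect flow (inr i) x) /\
  (forall x : P + T, exists2 o, o \in O & connect flow x (inr o)).

Definition k_sound (I O : {set P}) (k : nat) : Prop :=
  forall m, reach (mk_scale k (mk_of_set I)) m -> reach m (mk_scale k (mk_of_set O)).

Definition star_sound (I O : {set P}) : Prop :=
  forall k, 1 <= k -> k_sound I O k.

Definition sub_sound (I O : {set P}) : Prop :=
  forall (k k' : nat) (m' : marking), k' <= k ->
    reach (mk_scale k (mk_of_set I)) (mk_add m' (mk_scale k' (mk_of_set O))) ->
    reach m' (mk_scale (k - k') (mk_of_set O)).

End Nets.

(* Place completion of a tWF net: places P + bool, where inr false = p_i and
   inr true = p_o are the two fresh places. *)
Definition pc_net (P T : finType) (N : petri_net P T) (I O : {set T})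
  : petri_net (P + bool)%type T :=
  PetriNet
    (fun (q : P + bool) (t : T) => match q with
              | inl p => pre N p t
              | inr false => t \in I
              | inr true => false end)
    (fun (t : T) (q : P + bool) => match q with
              | inl p => post N t p
              | inr false => false
              | inr true => t \in O end).

Definition pc_in (P : finType) : {set P + bool} := [set inr false].
Definition pc_out (P : finType) : {set P + bool} := [set inr true].

Definition star_sound_t (P T : finType) (N : petri_net P T) (I O : {set T}) :=
  star_sound (pc_net N I O) (pc_in P) (pc_out P).

Definition sub_sound_t (P T : finType) (N : petri_net P T) (I O : {set T}) :=
  sub_sound (pc_net N I O) (pc_in P) (pc_out P).

(* Main.v *)
Require Import Defs.
From Stdlib Require Import Relations.
From mathcomp Require Import all_boot.

Section Aux.
Variables (P T : finType) (N : petri_net P T) (I O : {set T}).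
Let M := pc_net N I O.

Lemma strip_out (x y : marking (P + bool)%type) :
  reach M x y -> forall a d, x = mk_add a (mk_scale d (mk_of_set (pc_out P))) ->
  exists2 b, y = mk_add b (mk_scale d (mk_of_set (pc_out P))) & reach M a b.
Proof.
move=> /clos_rt_rt1n_iff H; elim: H => [x0|x0 z y0 Hs _ IH] a d Ex.
  by exists a => //; apply: rt_refl.
case: Hs => t En Ez.
have Ena : enabled M a t.
  move=> q; have := En q; rewrite Ex ffunE /mk_scale ffunE /mk_of_set ffunE.
  case: q => [p|[|]] /=; rewrite ?in_set1 //= muln0 addn0 //.
have E2 : z = mk_add (fire M a t) (mk_scale d (mk_of_set (pc_out P))).
  rewrite Ez Ex; apply/ffunP => q; rewrite !ffunE.
  case: q => [p|[|]] /=; rewrite ?in_set1 //= ?muln0 ?addn0 ?muln1 ?subn0 //.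
  by rewrite addnAC.
have [b Eb Rb] := IH _ _ E2.
exists b => //; apply: rt_trans Rb; apply: rt_step; exact: (Step Ena).
Qed.

End Aux.

Theorem mainTheorem7 (P T : finType) (N : petri_net P T) (I O : {set T}) :
  is_tWF N I O -> (star_sound_t N I O <-> sub_sound_t N I O).
Proof.
move=> [_ [_ [Hin _]]]; split.
- move=> Hs k k' m' Hk R.
  case: k Hk R => [|k] Hk R.
  + case: k' Hk R => // Hk R.
    have Hpre : forall t, exists q, pre (pc_net N I O) q t.
      move=> t; have [i iI /connectP [p Hp Et]] := Hin (inr t).
      case/lastP: p Hp Et => [|p z] Hp Et.
        by case: Et => ->; exists (inr false).
      rewrite rcons_path in Hp; rewrite last_rcons in Et; subst z.
      case/andP: Hp => _; case: (last (inr i) p) => [q|u] //= H.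
      by exists (inl q).
    move/clos_rt_rt1n_iff: R; set z := mk_scale _ _.
    have z0 : forall q, z q = 0 by move=> q; rewrite ffunE.
    move=> R; inversion R as [E|y u Hst _ E].
    * have -> : m' = mk_scale 0 (mk_of_set (pc_out P)).
        apply/ffunP => q; have := f_equal (fun f : marking _ => f q) E.
        by rewrite /= z0 !ffunE /= => /eqP; rewrite eq_sym addn_eq0 => /andP [/eqP -> _].
      exact: rt_refl.
    * case: Hst => t En _; have [q Hq] := Hpre t; have := En q.
      by rewrite z0 Hq.
  + have Hr := Hs k.+1 erefl _ R.
    have [b Eb Rb] := @strip_out P T N I O _ _ Hr _ _ (erefl _).
    have -> : mk_scale (k.+1 - k') (mk_of_set (pc_out P)) = b; last by [].
    apply/ffunP => q; have := f_equal (fun f : marking _ => f q) Eb.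
    rewrite /= !ffunE; case: (q \in pc_out P) => /=; rewrite ?muln1 ?muln0 ?addn0 //.
    move=> ->; by rewrite addnK.
- move=> Hs k k1 m R.
  have := Hs k 0 m (leq0n k).
  rewrite subn0; apply.
  have -> : mk_add m (mk_scale 0 (mk_of_set (pc_out P))) = m.
    by apply/ffunP => q; rewrite !ffunE addn0.
  exact: R.
Qed.
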